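(* Consider the contextual second-price pay-per-click auction problem described in the context, with a CTR predictor class $\mathcal{F}$ satisfying realizability with perfect predictor $f^*\in\mathcal{F}$. Run the exponential-weights algorithm described in the context with the optimistic squared error (OptSq) loss estimator and learning rate $\eta\le 1$. Then $$\mathbb{E}[\mathrm{Reg}]\le\frac{Z_T}{\eta}+O\Big(\eta\sum_{t=1}^T N_t\Big),\qquad Z_T=-\mathbb{E}\Big[\log\mathbb{E}_{f\sim q_1}\exp\Big(-\eta\sum_{t=1}^T(\hat\ell_{t,f}-\hat\ell_{t,f^*})\Big)\Big],$$ where the $O(\cdot)$ hides only an absolute constant.
   Context: Notation: for a vector $v$, $\mathrm{smax}_i v_i$ is the second-largest entry; $\arg\max_i v_i$, $\arg\mathrm{smax}_i v_i$ are the indices of the largest and second-largest entries, ties broken by a fixed deterministic rule. Problem: $T$ rounds. At each round $t$: the learner observes a context $x_t\in\mathcal{X}$ and $N_t$ bidders ($N=\max_tN_t$); chooses estimated CTRs $\tilde\rho_t\in[0,1]^{N_t}$; simultaneously bidders choose bids $b_{t,i}\in[0,1]$ (contexts and bids may be chosen by an adaptive adversary, bids without knowing $\tilde\rho_t$). Winner $i_t=\arg\max_{i\in[N_t]}b_{t,i}\tilde\rho_{t,i}$, runner-up $j_t=\arg\mathrm{smax}_{i\in[N_t]}b_{t,i}\tilde\rho_{t,i}$, payment per click $d_t=b_{t,j_t}\tilde\rho_{t,j_t}/\tilde\rho_{t,i_t}$; the ad $i_t$ is clicked with probability $\rho_{t,i_t}$ (true unknown CTR). The learner observes $b_t$ and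 the click indicator $c_t\in\{0,1\}$ and receives $c_td_t$. Regret: $\mathrm{Reg}=\sum_{t=1}^T\mathrm{smax}_{i\in[N_t]}b_{t,i}\rho_{t,i}-\sum_{t=1}^Tc_td_t$. Realizability: $\mathcal{F}$ is a class of functions $f:\mathcal{X}\times[N]\to[0,1]$ containing $f^*$ with $f^*(x_t,i)=\rho_{t,i}$ for all $t,i$. Algorithm: with learning rate $\eta>0$, at each round $t$ sample $f_t$ from the distribution $q_t$ over $\mathcal{F}$ given by $q_{t,f}\propto\exp(-\eta\sum_{s<t}\hat\ell_{s,f})$ (so $q_1$ is the uniform distribution over $\mathcal{F}$); set $\tilde\rho_{t,i}=f_t(x_t,i)$ for $i\in[N_t]$, run the auction, and for each $f\in\mathcal{F}$ define the OptSq estimator $$\hat\ell_{t,f}=\frac{1}{4\eta}\big(f(x_t,i_t)-c_t\big)^2-\mathrm{smax}_{j\in[N_t]}b_{t,j}f(x_t,j).$$ *)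

(* Defs.v *)
From HB Require Import structures.
From mathcomp Require Import all_boot all_order all_algebra.
From mathcomp Require Import all_classical all_reals all_analysis.
Set Implicit Arguments. Unset Strict Implicit. Unset Printing Implicit Defensive.
Import Order.TTheory GRing.Theory Num.Theory.
Local Open Scope ring_scope.

Section Auction.
Variables (R : realType) (X : Type) (F : finType).

Definition mxl (l : seq R) : R := \big[Num.max/head 0 l]_(y <- l) y.

(* first index of the list I achieving the maximal score: deterministic tie rule
   = smallest index *)
Definition amax (I : seq nat) (s : nat -> R) : nat :=
  nth 0%N I (find (fun i => s i == mxl (map s I)) I).

(* arg max_{i in [n]} s_i  (indices 0..n-1) *)
Definition winner (n : nat) (s : nat -> R) : nat := amax (iota 0 n) s.
Definition runner (n : nat) (s : nat -> R) : nat :=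
  amax [seq i <- iota 0 n | i != winner n s] s.
Definition smaxv (n : nat) (s : nat -> R) : R := s (runner n s).

(* one round of the interaction: context x_t, number of bidders N_t, bids b_t,
   sampled predictor f_t, click indicator c_t *)
Record round := Round { rx : X; rn : nat; rb : nat -> R; rf : F; rc : bool }.

Variable fv : F -> X -> nat -> R.  (* the predictor class (indexed by F) *)

Definition scores (x : X) (b : nat -> R) (f : F) : nat -> R :=
  fun i => b i * fv f x i.
Definition win (r : round) : nat := winner (rn r) (scores (rx r) (rb r) (rf r)).
Definition run (r : round) : nat := runner (rn r) (scores (rx r) (rb r) (rf r)).
(* payment per click d_t (with the convention y / 0 = 0 of MathComp) *)
Definition pay (r : round) : R :=
  rb r (run r) * fv (rf r) (rx r) (run r) / fv (rf r) (rx r) (win r).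

Definition lhat (eta : R) (r : round) (g : F) : R :=
  (4 * eta)^-1 * (fv g (rx r) (win r) - (rc r)%:R) ^+ 2
  - smaxv (rn r) (fun j => rb r j * fv g (rx r) j).

Definition cumloss (eta : R) (h : seq round) (g : F) : R :=
  \sum_(r <- h) lhat eta r g.

Definition qw (eta : R) (h : seq round) (g : F) : R :=
  expR (- eta * cumloss eta h g) / \sum_(g' : F) expR (- eta * cumloss eta h g').

(* adversary: maps the past history to (x_t, N_t, b_t) *)
Definition adversary := seq round -> (X * nat * (nat -> R)).

(* E[G(history after k more rounds)] starting from history h, where f_t ~ q_t and
   c_t ~ Bernoulli(rho_{t,i_t}), rho = fv fstar (realizability). *)
Fixpoint Eexp (eta : R) (fstar : F) (adv : adversary) (k : nat) (h : seq round)
    (G : seq round -> R) : R :=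
  match k with
  | 0%N => G h
  | k'.+1 =>
    let '(x, n, b) := adv h in
    \sum_(f : F) qw eta h f *
      (let p := fv fstar x (win (Round x n b f true)) in
       p * Eexp eta fstar adv k' (rcons h (Round x n b f true)) G
       + (1 - p) * Eexp eta fstar adv k' (rcons h (Round x n b f false)) G)
  end.

Definition regret (fstar : F) (h : seq round) : R :=
  \sum_(r <- h) (smaxv (rn r) (fun i => rb r i * fv fstar (rx r) i) - (rc r)%:R * pay r).

(* -log E_{f ~ q_1} exp(-eta sum_t (lhat_{t,f} - lhat_{t,f*})), q_1 uniform on F *)
Definition Zinner (eta : R) (fstar : F) (h : seq round) : R :=
  - ln ((#|F|%:R)^-1 * \sum_(g : F)
          expR (- eta * \sum_(r <- h) (lhat eta r g - lhat eta r fstar))).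

Definition sumN (h : seq round) : R := \sum_(r <- h) (rn r)%:R.

End Auction.

(* Main.v *)
Require Import Defs.
From HB Require Import structures.
From mathcomp Require Import all_boot all_order all_algebra.
From mathcomp Require Import all_classical all_reals all_analysis.
From mathcomp Require Import ring lra.
Import Order.TTheory GRing.Theory Num.Theory.
Local Open Scope ring_scope.
Section RealFacts.
Variable R : realType.
Implicit Types z y u r w : R.

Lemma expR_inv_bound w : w < 1 -> expR w * (1 - w) <= 1.
Proof.
move=> hw; have h := expR_ge1Dx (- w).
have e : expR w * expR (- w) = 1 by rewrite -expRD subrr expR0.
rewrite -[X in _ <= X]e.
apply: ler_wpM2l; first exact: expR_ge0.
lra.
Qed.

Lemma expR_le_quad1 z : z <= 1/4 -> expR z <= 1 + z + 4/3 * z ^+ 2.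
Proof.
move=> hz; have h : expR z * (1 - z) <= 1 by apply: expR_inv_bound; lra.
have e0 := expR_gt0 z.
set a := expR z in h e0 *.
have hp : 1 <= (1 - z) * (1 + z + 4/3 * z ^+ 2).
  have -> : (1 - z) * (1 + z + 4/3 * z ^+ 2) = 1 + z^+2 * (1 - 4 * z) / 3 by field.
  have : 0 <= z^+2 * (1 - 4 * z) / 3.
    apply: divr_ge0 => //; apply: mulr_ge0; [exact: sqr_ge0| lra].
  lra.
nra.
Qed.

Lemma expR_le_quad2 y : y <= 1 -> expR y <= 1 + y + 4 * y ^+ 2.
Proof.
move=> hy; set w := y / 2.
have -> : y = w + w by rewrite /w; field.
rewrite expRD.
have h : expR w * (1 - w) <= 1 by apply: expR_inv_bound; rewrite /w; lra.
have e0 := expR_gt0 w.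
set a := expR w in h e0 *.
have hw : w <= 1/2 by rewrite /w; lra.
have hp : 1 <= (1 - w) ^+ 2 * (1 + (w + w) + 4 * (w + w) ^+ 2).
  have -> : (1 - w) ^+ 2 * (1 + (w + w) + 4 * (w + w) ^+ 2) = 1 + w^+2 * (13 - 30 * w + 16 * w^+2) by ring.
  have : 0 <= w^+2 * (13 - 30 * w + 16 * w^+2).
    apply: mulr_ge0; [exact: sqr_ge0| nra].
  lra.
have h2 : (a * (1 - w)) ^+ 2 <= 1.
  have h3 : 0 <= a * (1 - w) by apply: mulr_ge0; lra.
  rewrite expr2; nra.
have s0 : 0 < (1 - w) ^+ 2 by apply: exprn_gt0; lra.
rewrite -(ler_pM2l s0).
move: h2; rewrite exprMn => h2.
have -> : (1 - w) ^+ 2 * (a * a) = a ^+ 2 * (1 - w) ^+ 2 by rewrite expr2; ring.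
lra.
Qed.

Lemma core_ineq u r y : 0 <= u <= 1 -> 0 <= r <= 1 -> y <= 1 ->
  r * expR (- (1/4 * ((u - 1) ^+ 2 - (r - 1) ^+ 2)) + y)
  + (1 - r) * expR (- (1/4 * ((u - 0) ^+ 2 - (r - 0) ^+ 2)) + y)
  <= 1 + y + 4 * y ^+ 2 - (u - r) ^+ 2 / 24.
Proof.
move=> /andP[u0 u1] /andP[r0 r1] hy.
rewrite !expRD.
set z1 := - (1/4 * ((u - 1) ^+ 2 - (r - 1) ^+ 2)).
set z0 := - (1/4 * ((u - 0) ^+ 2 - (r - 0) ^+ 2)).
have h1 : expR z1 <= 1 + z1 + 4/3 * z1 ^+ 2 by apply: expR_le_quad1; rewrite /z1; nra.
have h0 : expR z0 <= 1 + z0 + 4/3 * z0 ^+ 2 by apply: expR_le_quad1; rewrite /z0; nra.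
have hq : expR y <= 1 + y + 4 * y ^+ 2 by apply: expR_le_quad2.
have ey := expR_gt0 y.
have m1 : r * expR z1 + (1 - r) * expR z0 <= 1 - (u - r)^+2 / 12.
  apply: (le_trans (y := r * (1 + z1 + 4/3 * z1 ^+ 2) + (1 - r) * (1 + z0 + 4/3 * z0 ^+ 2))).
    apply: lerD; apply: ler_wpM2l => //; lra.
  have -> : r * (1 + z1 + 4/3 * z1 ^+ 2) + (1 - r) * (1 + z0 + 4/3 * z0 ^+ 2)
     = 1 - (u - r)^+2 / 12 - (u - r)^+2 / 12 * (2 - (u - r)^+2 - 4 * r * (1 - r)) by rewrite /z1 /z0; field.
  have : 0 <= (u - r)^+2 / 12 * (2 - (u - r)^+2 - 4 * r * (1 - r)).
    apply: mulr_ge0; first by apply: divr_ge0 => //; exact: sqr_ge0.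
    nra.
  lra.
set m := 1 - (u - r)^+2 / 12.
have m0 : 0 <= m by rewrite /m; nra.
have Q0 : 1/2 <= 1 + y + 4 * y ^+ 2 by nra.
apply: (le_trans (y := m * expR y)).
  have -> : r * (expR z1 * expR y) + (1 - r) * (expR z0 * expR y) = (r * expR z1 + (1 - r) * expR z0) * expR y by ring.
  by apply: ler_wpM2r => //; exact: ltW.
apply: (le_trans (y := m * (1 + y + 4 * y ^+ 2))).
  by apply: ler_wpM2l.
rewrite /m.
have : 0 <= (u - r)^+2 by exact: sqr_ge0.
nra.
Qed.
End RealFacts.
Section Auc.
Variable R : realType.

Lemma bigmax_props (l : seq R) (idx : R) :
  let m := \big[Num.max/idx]_(y <- l) y in
  [/\ idx <= m, (forall y, y \in l -> y <= m) & (m = idx \/ m \in l)].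
Proof.
elim: l => [|a l [IH1 IH2 IH3]] /=; first by rewrite big_nil; split => //; left.
rewrite big_cons; set m := \big[Num.max/idx]_(y <- l) y in IH1 IH2 IH3 *.
split.
- by rewrite le_max IH1 orbT.
- move=> y; rewrite in_cons => /orP[/eqP ->|yl]; first by rewrite le_max lexx.
  by rewrite le_max IH2 ?orbT.
- case: (leP a m) => h.
  + by case: IH3 => [->|ml]; [left|right; rewrite in_cons ml orbT].
  + by right; rewrite in_cons eqxx.
Qed.

Lemma mxl_props (l : seq R) : l != [::] ->
  mxl l \in l /\ (forall y, y \in l -> y <= mxl l).
Proof.
case: l => [//|a l] _; rewrite /mxl /=.
have [_ H2 H3] := bigmax_props (a :: l) a.
split => //; case: H3 => [->|//]; exact: mem_head.
Qed.

Lemma amax_props (I : seq nat) (s : nat -> R) : I != [::] ->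
  amax I s \in I /\ (forall j, j \in I -> s j <= s (amax I s)).
Proof.
move=> I0.
have [m_in m_ge] := @mxl_props (map s I) ltac:(by case: I I0).
have hs : has (fun i => s i == mxl (map s I)) I.
  by case/mapP: m_in => k kI e; apply/hasP; exists k => //; rewrite -e.
have := nth_find 0%N hs; rewrite /amax => /eqP ->.
split; first by apply: mem_nth; rewrite -has_find.
by move=> j jI; apply: m_ge; apply: map_f.
Qed.

Lemma winner_props n (s : nat -> R) : (0 < n)%N ->
  (winner n s < n)%N /\ (forall j, (j < n)%N -> s j <= s (winner n s)).
Proof.
move=> n0; have I0 : iota 0 n != [::] by case: n n0.
have [h1 h2] := amax_props _ s I0.
split; first by move: h1; rewrite /winner mem_iota.
by move=> j jn; apply: h2; rewrite mem_iota.
Qed.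

Lemma runner_props n (s : nat -> R) : (2 <= n)%N ->
  (runner n s < n)%N /\ s (runner n s) <= s (winner n s).
Proof.
move=> n2; have [w1 w2] := winner_props _ s (ltnW n2).
set I := [seq i <- iota 0 n | i != winner n s].
have I0 : I != [::].
  have : (0 \in I) || (1 \in I).
    rewrite !mem_filter !mem_iota /=.
    case: (winner n s) => [|k]; rewrite add0n /=; first by rewrite n2.
    by rewrite (ltnW n2).
  by move=> H; apply/eqP => E; move: H; rewrite E.
have [h1 _] := amax_props _ s I0.
have rn : (runner n s < n)%N by move: h1; rewrite /runner -/I mem_filter mem_iota => /andP[_].
by split => //; apply: w2.
Qed.
End Auc.
Section EX.
Variables (R : realType) (X : Type) (F : finType) (fv : F -> X -> nat -> R)
  (fstar : F) (eta : R) (adv : adversary R X F).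
Hypothesis fv01 : forall g x i, 0 <= fv g x i <= 1.

Notation q := (qw fv eta).
Notation E := (Eexp fv eta fstar adv).

Lemma den_gt0 h : 0 < \sum_(g' : F) expR (- eta * cumloss fv eta h g').
Proof.
rewrite (bigD1 fstar) //=; apply: ltr_pwDl; first exact: expR_gt0.
by apply: sumr_ge0 => g _; exact: expR_ge0.
Qed.

Lemma qw_ge0 h g : 0 <= q h g.
Proof. by rewrite /qw; apply: divr_ge0; [exact: expR_ge0| exact: ltW (den_gt0 h)]. Qed.

Lemma qw_sum h : \sum_g q h g = 1.
Proof.
rewrite /qw -mulr_suml divff //; exact: lt0r_neq0 (den_gt0 h).
Qed.

Lemma Eexp_lin k h a G1 G2 :
  E k h (fun x => a * G1 x + G2 x) = a * E k h G1 + E k h G2.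
Proof.
elim: k h => [//|k IH] h /=.
case: (adv h) => [[x n] b].
rewrite mulr_sumr -big_split /=; apply: eq_bigr => f _.
rewrite !IH; ring.
Qed.

Lemma Eexp_super (G : seq (round R X F) -> R) (psi : seq (round R X F) -> round R X F -> R) :
  (forall h r, G (rcons h r) = G h + psi h r) ->
  (forall h x n b, adv h = (x, n, b) ->
     \sum_(f : F) q h f *
       (fv fstar x (win fv (Round x n b f true)) * psi h (Round x n b f true)
        + (1 - fv fstar x (win fv (Round x n b f true))) * psi h (Round x n b f false)) <= 0) ->
  forall k h, E k h G <= G h.
Proof.
move=> HG Hpsi; elim=> [//|k IH] h /=.
case E0: (adv h) => [[x n] b].
have := Hpsi h x n b E0.
set S := \sum_f _ => HS.
apply: (le_trans (y := \sum_f q h f * (fv fstar x (win fv (Round x n b f true)) * G (rcons h (Round x n b f true))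
       + (1 - fv fstar x (win fv (Round x n b f true))) * G (rcons h (Round x n b f false))))).
  apply: ler_sum => f _; apply: ler_wpM2l; first exact: qw_ge0.
  have /andP[p0 p1] := fv01 fstar x (win fv (Round x n b f true)).
  apply: lerD; apply: ler_wpM2l; rewrite ?subr_ge0 //; exact: IH.
under eq_bigr => f _ do rewrite !HG.
have -> : \sum_f q h f * (fv fstar x (win fv (Round x n b f true)) * (G h + psi h (Round x n b f true))
      + (1 - fv fstar x (win fv (Round x n b f true))) * (G h + psi h (Round x n b f false)))
   = G h * \sum_f q h f + S.
  rewrite mulr_sumr /S -big_split /=; apply: eq_bigr => f _; ring.
by rewrite qw_sum mulr1 gerDl.
Qed.
Definition Dl h g := \sum_(r <- h) (lhat fv eta r g - lhat fv eta r fstar).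
Definition W h := \sum_(g : F) expR (- eta * Dl h g).

Lemma W_gt0 h : 0 < W h.
Proof.
rewrite /W (bigD1 fstar) //=; apply: ltr_pwDl; first exact: expR_gt0.
by apply: sumr_ge0 => g _; exact: expR_ge0.
Qed.

Lemma card_gt0 : (0 < #|F|)%N.
Proof. by apply/card_gt0P; exists fstar. Qed.

Lemma Zinner_nil : Zinner fv eta fstar [::] = 0.
Proof.
rewrite /Zinner.
under eq_bigr => g _ do rewrite big_nil mulr0 expR0.
rewrite sumr_const -[_ *+ _]mulr_natr mul1r mulVf ?ln1 ?oppr0 //.
by rewrite pnatr_eq0 -lt0n card_gt0.
Qed.

Lemma qw_W h g : q h g = expR (- eta * Dl h g) / W h.
Proof.
have e : forall g', expR (- eta * cumloss fv eta h g') =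
   expR (- eta * Dl h g') * expR (- eta * cumloss fv eta h fstar).
  by move=> gg; rewrite -expRD; congr expR; rewrite /Dl sumrB /cumloss; ring.
rewrite /qw e; under eq_bigr => g' _ do rewrite e.
rewrite -mulr_suml -/(W h).
have K0 : expR (- eta * cumloss fv eta h fstar) != 0 by exact: lt0r_neq0 (expR_gt0 _).
have W0 : W h != 0 by exact: lt0r_neq0 (W_gt0 h).
by rewrite invfM mulrACA divff // mulr1.
Qed.

Lemma Zinner_rcons h r : Zinner fv eta fstar (rcons h r) = Zinner fv eta fstar h
   - ln (\sum_g q h g * expR (- eta * (lhat fv eta r g - lhat fv eta r fstar))).
Proof.
have eW : W (rcons h r) = W h * \sum_g q h g * expR (- eta * (lhat fv eta r g - lhat fv eta r fstar)).
  rewrite mulr_sumr /W; apply: eq_bigr => g _.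
  rewrite qw_W /Dl -cats1 big_cat big_seq1 /= mulrDr expRD.
  have W0 : W h != 0 by exact: lt0r_neq0 (W_gt0 h).
  rewrite /W in W0 *; field; exact: W0.
have eZ : forall h', Zinner fv eta fstar h' = - ln (#|F|%:R^-1 * W h') by [].
have c0 : 0 < (#|F|%:R : R)^-1 by rewrite invr_gt0 ltr0n card_gt0.
have S0 : 0 < \sum_g q h g * expR (- eta * (lhat fv eta r g - lhat fv eta r fstar)).
  have := W_gt0 (rcons h r); rewrite eW pmulr_rgt0 //; exact: W_gt0.
rewrite !eZ eW mulrA lnM; first by rewrite opprD.
  by rewrite posrE; apply: mulr_gt0 => //; exact: W_gt0.
by rewrite posrE.
Qed.
End EX.
Section One.
Variables (R : realType) (X : Type) (F : finType) (fv : F -> X -> nat -> R)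
  (fstar : F) (eta : R).
Hypothesis fv01 : forall g x i, 0 <= fv g x i <= 1.
Hypothesis eta0 : 0 < eta.
Hypothesis eta1 : eta <= 1.

Notation q := (qw fv eta).

Definition psi (C : R) h (r : round R X F) : R :=
  (smaxv (rn r) (fun i => rb r i * fv fstar (rx r) i) - (rc r)%:R * pay fv r)
  + (- eta^-1) * (- ln (\sum_g q h g * expR (- eta * (lhat fv eta r g - lhat fv eta r fstar))))
  + (- (C * eta)) * (rn r)%:R.

Let qge0 := @qw_ge0 R X F fv fstar eta.

Lemma qw_gt0 h g : 0 < q h g.
Proof. rewrite (@qw_W R X F fv fstar eta); apply: divr_gt0; [exact: expR_gt0| exact: (@W_gt0 R X F fv fstar)]. Qed.

Variables (h : seq (round R X F)) (x : X) (n : nat) (b : nat -> R).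
Hypothesis hn : (2 <= n)%N.
Hypothesis hb : forall i, (i < n)%N -> 0 <= b i <= 1.

Definition Sv g := smaxv n (fun j => b j * fv g x j).
Definition iw f := winner n (scores fv x b f).

Lemma Sv01 g : 0 <= Sv g <= 1.
Proof.
rewrite /Sv /smaxv; have [r1 _] := @runner_props _ n (fun j => b j * fv g x j) hn.
have /andP[b0 b1] := hb _ r1; have /andP[f0 f1] := fv01 g x (runner n (fun j => b j * fv g x j)).
apply/andP; split; first exact: mulr_ge0.
by rewrite -(mulr1 1); apply: ler_pM.
Qed.

Lemma Sv_le f : Sv f <= fv f x (iw f).
Proof.
have [r1 r2] := @runner_props _ n (fun j => b j * fv f x j) hn.
have [w1 _] := @winner_props _ n (fun j => b j * fv f x j) (ltnW hn).
apply: (le_trans r2).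
have /andP[b0 b1] := hb _ w1; have /andP[f0 f1] := fv01 f x (winner n (fun j => b j * fv f x j)).
by rewrite -[X in _ <= X]mul1r; apply: ler_wpM2r.
Qed.

Lemma iw_lt f : (iw f < n)%N.
Proof. by have [w1 _] := @winner_props _ n (fun j => b j * fv f x j) (ltnW hn). Qed.

Definition Pc f (c : bool) :=
  \sum_g q h g * expR (- eta * (lhat fv eta (Round x n b f c) g - lhat fv eta (Round x n b f c) fstar)).

Lemma Pc_gt0 f c : 0 < Pc f c.
Proof.
rewrite /Pc (bigD1 fstar) //=; apply: ltr_pwDl.
  by apply: mulr_gt0; [exact: qw_gt0| exact: expR_gt0].
by apply: sumr_ge0 => g _; apply: mulr_ge0; [exact: qge0| exact: expR_ge0].
Qed.

Lemma expo f g (c : bool) :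
  - eta * (lhat fv eta (Round x n b f c) g - lhat fv eta (Round x n b f c) fstar)
  = - (1/4 * ((fv g x (iw f) - c%:R) ^+ 2 - (fv fstar x (iw f) - c%:R) ^+ 2)) + eta * (Sv g - Sv fstar).
Proof.
rewrite /lhat /Sv /iw /win /=.
have e0 : eta != 0 by exact: lt0r_neq0.
by field.
Qed.

Lemma core_f f :
  fv fstar x (iw f) * Pc f true + (1 - fv fstar x (iw f)) * Pc f false <=
  \sum_g q h g * (1 + eta * (Sv g - Sv fstar) + 4 * eta ^+ 2 - (fv g x (iw f) - fv fstar x (iw f)) ^+ 2 / 24).
Proof.
set p := fv fstar x (iw f); rewrite /Pc !mulr_sumr -big_split /=; apply: ler_sum => g _.
rewrite !expo.
have -> : p * (q h g * expR (- (1 / 4 * ((fv g x (iw f) - true%:R) ^+ 2 - (fv fstar x (iw f) - true%:R) ^+ 2)) + eta * (Sv g - Sv fstar)))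
  + (1 - p) * (q h g * expR (- (1 / 4 * ((fv g x (iw f) - false%:R) ^+ 2 - (fv fstar x (iw f) - false%:R) ^+ 2)) + eta * (Sv g - Sv fstar)))
  = q h g * (p * expR (- (1 / 4 * ((fv g x (iw f) - 1) ^+ 2 - (p - 1) ^+ 2)) + eta * (Sv g - Sv fstar))
     + (1 - p) * expR (- (1 / 4 * ((fv g x (iw f) - 0) ^+ 2 - (p - 0) ^+ 2)) + eta * (Sv g - Sv fstar))).
  by rewrite /p /= mulr1n mulr0n; ring.
apply: ler_wpM2l; first exact: qge0.
have /andP[sg0 sg1] := Sv01 g; have /andP[ss0 ss1] := Sv01 fstar.
have hy : eta * (Sv g - Sv fstar) <= 1.
  have : eta * (Sv g - Sv fstar) <= eta * 1 by apply: ler_wpM2l; [exact: ltW| lra].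
  rewrite mulr1 => H; exact: le_trans H eta1.
apply: (le_trans (@core_ineq _ _ _ _ (fv01 g x (iw f)) (fv01 fstar x (iw f)) hy)).
have : (eta * (Sv g - Sv fstar)) ^+ 2 <= eta ^+ 2.
  rewrite exprMn -[X in _ <= X]mulr1; apply: ler_wpM2l; first exact: sqr_ge0.
  nra.
by move=> H; rewrite lerD2r lerD2l ler_pM2l.
Qed.

Lemma perf C f :
  fv fstar x (iw f) * psi C h (Round x n b f true) + (1 - fv fstar x (iw f)) * psi C h (Round x n b f false) <=
  (Sv fstar - Sv f) + (Sv f / fv f x (iw f)) * (fv f x (iw f) - fv fstar x (iw f))
  + \sum_g q h g * (Sv g - Sv fstar) + 4 * eta
  - (24 * eta)^-1 * \sum_g q h g * (fv g x (iw f) - fv fstar x (iw f)) ^+ 2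
  - C * eta * n%:R.
Proof.
have hpsi : forall c : bool, psi C h (Round x n b f c) =
    Sv fstar - c%:R * (Sv f / fv f x (iw f)) + eta^-1 * ln (Pc f c) - C * eta * n%:R.
  move=> c; rewrite /psi /Pc /pay /Sv /iw /smaxv /run /win /scores /=; ring.
have lnle : forall c, ln (Pc f c) <= Pc f c - 1.
  move=> c; have := @le_ln1Dx R (Pc f c - 1); rewrite [1 + _]addrC subrK; apply.
  have := Pc_gt0 f c; lra.
have ip : 0 < eta^-1 by rewrite invr_gt0.
have e0 : eta != 0 by exact: lt0r_neq0.
have tf : Sv f / fv f x (iw f) * fv f x (iw f) = Sv f.
  case: (eqVneq (fv f x (iw f)) 0) => [z|nz]; last by rewrite divfK.
  have := Sv_le f; have /andP[s0 _] := Sv01 f; rewrite z mulr0 => s1.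
  by apply/eqP; rewrite eq_le s0 s1.
rewrite !hpsi /= mulr1n mulr0n.
set p := fv fstar x (iw f).
set t := Sv f / fv f x (iw f).
set K := C * eta * n%:R.
set A := \sum_g q h g * (Sv g - Sv fstar).
set B := \sum_g q h g * (fv g x (iw f) - p) ^+ 2.
have /andP[p0 p1] : 0 <= p <= 1 by exact: fv01.
apply: (le_trans (y := p * (Sv fstar - t + eta^-1 * (Pc f true - 1) - K)
    + (1 - p) * (Sv fstar - 0 * t + eta^-1 * (Pc f false - 1) - K))).
  apply: lerD; apply: ler_wpM2l; rewrite ?subr_ge0 //.
    by rewrite mul1r lerD2r lerD2l ler_pM2l.
  by rewrite lerD2r lerD2l ler_pM2l.
have e1 : \sum_g q h g * (1 + eta * (Sv g - Sv fstar) + 4 * eta ^+ 2 - (fv g x (iw f) - p) ^+ 2 / 24)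
   = (\sum_g q h g) * (1 + 4 * eta ^+ 2) + eta * A - B / 24.
  rewrite /A /B mulr_suml mulr_sumr mulr_suml -big_split -sumrB /=.
  by apply: eq_bigr => g _; ring.
have := core_f f; rewrite e1 (@qw_sum R X F fv fstar eta) mul1r -/p => Hc.
have eL : p * (Sv fstar - t + eta^-1 * (Pc f true - 1) - K)
    + (1 - p) * (Sv fstar - 0 * t + eta^-1 * (Pc f false - 1) - K)
    = Sv fstar - p * t + eta^-1 * (p * Pc f true + (1 - p) * Pc f false - 1) - K by ring.
have eR : Sv fstar - Sv f + t * (fv f x (iw f) - p) + A + 4 * eta - (24 * eta)^-1 * B - K
    = Sv fstar - p * t + eta^-1 * ((1 + 4 * eta ^+ 2 + eta * A - B / 24) - 1) - K.
  rewrite mulrBr tf; field => //.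
rewrite eL eR lerD2r lerD2l ler_pM2l // lerD2r.
exact: Hc.
Qed.
Definition pk (k : nat) := \sum_(g | iw g == k) q h g.

Lemma pk_ge f : q h f <= pk (iw f).
Proof.
rewrite /pk (bigD1 f) //= lerDl; apply: sumr_ge0 => g _; exact: qge0.
Qed.

Lemma t01 f : 0 <= Sv f / fv f x (iw f) <= 1.
Proof.
have /andP[s0 _] := Sv01 f; have /andP[f0 _] := fv01 f x (iw f).
apply/andP; split; first exact: divr_ge0.
case: (eqVneq (fv f x (iw f)) 0) => [->|nz]; first by rewrite invr0 mulr0.
have fp : 0 < fv f x (iw f) by rewrite lt0r nz.
by rewrite ler_pdivrMr // mul1r; exact: Sv_le.
Qed.

Lemma amgm (t d l : R) : 0 <= t <= 1 -> 0 < l -> t * d <= l * d ^+ 2 + (4 * l)^-1.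
Proof.
move=> /andP[t0 t1] l0.
have l4 : 0 < 4 * l by rewrite mulr_gt0.
rewrite -(ler_pM2l l4) mulrDr mulfV ?lt0r_neq0 //.
have : 0 <= (2 * l * d - t) ^+ 2 by exact: sqr_ge0.
nra.
Qed.

Lemma b1 f : q h f * ((Sv f / fv f x (iw f)) * (fv f x (iw f) - fv fstar x (iw f)))
  <= (24 * eta)^-1 * (q h f * pk (iw f) * (fv f x (iw f) - fv fstar x (iw f)) ^+ 2)
     + 6 * eta * (q h f / pk (iw f)).
Proof.
have qf := qw_gt0 h f.
have pp : 0 < pk (iw f) by apply: lt_le_trans qf (pk_ge f).
have l0 : 0 < pk (iw f) / (24 * eta) by apply: divr_gt0 => //; rewrite mulr_gt0.
have := @amgm _ (fv f x (iw f) - fv fstar x (iw f)) _ (t01 f) l0.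
move/(ler_wpM2l (ltW qf)).
set d := fv f x (iw f) - fv fstar x (iw f).
move=> H; apply: (le_trans H); rewrite le_eqVlt; apply/orP; left; apply/eqP.
have e0 : eta != 0 by exact: lt0r_neq0.
have p0 : pk (iw f) != 0 by exact: lt0r_neq0.
field; by rewrite e0 p0.
Qed.
Lemma b2 : \sum_f q h f * pk (iw f) * (fv f x (iw f) - fv fstar x (iw f)) ^+ 2
  <= \sum_f q h f * \sum_g q h g * (fv g x (iw f) - fv fstar x (iw f)) ^+ 2.
Proof.
pose U f g := q h f * q h g * (fv g x (iw f) - fv fstar x (iw f)) ^+ 2.
have eR : \sum_f q h f * \sum_g q h g * (fv g x (iw f) - fv fstar x (iw f)) ^+ 2
    = \sum_f \sum_g U f g.
  apply: eq_bigr => f _; rewrite mulr_sumr; apply: eq_bigr => g _; rewrite /U; ring.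
rewrite eR exchange_big /=.
apply: ler_sum => f _.
rewrite /pk mulr_sumr mulr_suml big_mkcond /=.
apply: ler_sum => g _.
case: eqP => [e|_]; last first.
  rewrite /U; apply: mulr_ge0; [apply: mulr_ge0; exact: qge0| exact: sqr_ge0].
by rewrite /U e [q h g * q h f]mulrC.
Qed.

Lemma b3 : \sum_f q h f / pk (iw f) <= n%:R.
Proof.
have e : forall f, q h f / pk (iw f) = \sum_(k < n) (if iw f == k then q h f / pk k else 0).
  move=> f; rewrite -big_mkcond /= (big_pred1 (Ordinal (iw_lt f))) //.
rewrite (eq_bigr _ (fun f _ => e f)).
rewrite exchange_big /=.
apply: (le_trans (y := \sum_(k < n) (1 : R))); last by rewrite sumr_const card_ord.
apply: ler_sum => k _.
rewrite -big_mkcond /= -mulr_suml -/(pk k).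
case: (eqVneq (pk k) 0) => [->|nz]; first by rewrite invr0 mulr0.
by rewrite divff.
Qed.
Lemma one_step :
  \sum_f q h f * (fv fstar x (win fv (Round x n b f true)) * psi 10 h (Round x n b f true)
     + (1 - fv fstar x (win fv (Round x n b f true))) * psi 10 h (Round x n b f false)) <= 0.
Proof.
set A := \sum_g q h g * (Sv g - Sv fstar).
set K := 10 * eta * n%:R.
pose T f := (Sv f / fv f x (iw f)) * (fv f x (iw f) - fv fstar x (iw f)).
pose B f := \sum_g q h g * (fv g x (iw f) - fv fstar x (iw f)) ^+ 2.
apply: (le_trans (y := \sum_f q h f * ((Sv fstar - Sv f) + T f + A + 4 * eta - (24 * eta)^-1 * B f - K))).
  apply: ler_sum => f _; apply: ler_wpM2l; first exact: qge0.
  exact: perf.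
have qs := @qw_sum R X F fv fstar eta h.
have eS : \sum_f q h f * ((Sv fstar - Sv f) + T f + A + 4 * eta - (24 * eta)^-1 * B f - K)
   = (\sum_f q h f * (Sv fstar - Sv f) + \sum_f q h f * T f + (\sum_f q h f) * (A + 4 * eta - K))
     - (24 * eta)^-1 * \sum_f q h f * B f.
  rewrite mulr_suml mulr_sumr -!big_split -sumrB /=; apply: eq_bigr => f _; ring.
have eA : \sum_f q h f * (Sv fstar - Sv f) = - A.
  rewrite /A -sumrN; apply: eq_bigr => f _; ring.
rewrite eS eA qs mul1r.
have hT : \sum_f q h f * T f <= (24 * eta)^-1 * \sum_f q h f * B f + 6 * eta * n%:R.
  apply: (le_trans (y := \sum_f ((24 * eta)^-1 * (q h f * pk (iw f) * (fv f x (iw f) - fv fstar x (iw f)) ^+ 2)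
     + 6 * eta * (q h f / pk (iw f))))).
    apply: ler_sum => f _; exact: b1.
  rewrite big_split /= -!mulr_sumr.
  apply: lerD.
    apply: ler_wpM2l; first by rewrite invr_ge0 mulr_ge0 // ltW.
    exact: b2.
  apply: ler_wpM2l; first by rewrite mulr_ge0 // ltW.
  exact: b3.
have n2 : 2 <= (n%:R : R) by rewrite (ler_nat R 2 n).
have : 0 <= eta * (n%:R - 2) by apply: mulr_ge0; [exact: ltW| lra].
move=> H; have h4 : 4 * eta <= 2 * eta * n%:R by nra.
have eK : K = 5 * (2 * eta * n%:R) by rewrite /K; ring.
have e6 : 6 * eta * n%:R = 3 * (2 * eta * n%:R) by ring.
move: hT eK h4; rewrite e6; set S1 := \sum_f q h f * T f; set E := (24 * eta)^-1 * _.
move: (2 * eta * n%:R) => m.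
have := eta0.
lra.
Qed.
End One.

Theorem theorem3 :
  exists C : nat,
  forall (R : realType) (X : Type) (F : finType) (fv : F -> X -> nat -> R)
         (fstar : F) (eta : R) (T : nat) (adv : adversary R X F),
    injective fv ->
    (forall g x i, 0 <= fv g x i <= 1) ->
    0 < eta -> eta <= 1 ->
    (forall h, (2 <= (adv h).1.2)%N) ->
    (forall h i, (i < (adv h).1.2)%N -> 0 <= (adv h).2 i <= 1) ->
    Eexp fv eta fstar adv T [::] (regret fv fstar)
      <= Eexp fv eta fstar adv T [::] (Zinner fv eta fstar) / eta
         + C%:R * eta * Eexp fv eta fstar adv T [::] (@sumN R X F).
Proof.
exists 10%N => R X F fv fstar eta T adv _ fv01 eta0 eta1 hn hb.
pose Phi h := (- eta^-1) * Zinner fv eta fstar h + ((- (10%:R * eta)) * sumN h + regret fv fstar h).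
have key : Eexp fv eta fstar adv T [::] Phi <= Phi [::].
  apply: (@Eexp_super R X F fv fstar eta adv fv01 Phi (@psi R X F fv fstar eta 10%:R)).
    move=> h r; rewrite /Phi Zinner_rcons /sumN /regret -!cats1 !big_cat !big_seq1 /psi /=.
    ring.
  move=> h x n b E.
  have := hn h; have := hb h; rewrite E /= => hb' hn'.
  exact: (@one_step R X F fv fstar eta fv01 eta0 eta1 h x n b hn' hb').
have P0 : Phi [::] = 0 by rewrite /Phi Zinner_nil /sumN /regret !big_nil; ring.
move: key; rewrite P0 /Phi !Eexp_lin.
lra.
Qed.
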